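(* Let $G$ be an $n$-node graph of maximum degree $\Delta$, and let $K$ be an almost-clique of an $\epsilon$-almost-clique decomposition of $G$ with $\epsilon=10^{-5}$. Let $k\le \Delta/(C\log n)$ be an integer, for some large enough constant $C>0$. Suppose each $v\in K$ independently samples $t(v)\in[k]$ uniformly at random, and let $T_i=\{v\in K: t(v)=i\}$ for $i\in[k]$. Then, with high probability, for every $i\in[k]$ and every $u,w\in K$, $|T_i\cap N(u)\cap N(w)|\ge (C/4)\log n$.
   Context: $N(v)$ denotes the set of neighbors of $v$ in $G$. An $\epsilon$-almost-clique decomposition is a partition of $V$ into $V_{\mathrm{sparse}},K_1,\ldots,K_k$ such that nodes in $V_{\mathrm{sparse}}$ are $\Omega(\epsilon^2\Delta)$-sparse (sparsity $\zeta_v=\frac1\Delta(\binom{\Delta}{2}-m(N(v)))$ with $m(N(v))$ the number of edges inside $N(v)$) and each almost-clique $K_i$ satisfies $|K_i|\le(1+\epsilon)\Delta$, $|N(v)\cap K_i|\ge(1-\epsilon)\Delta$ for all $v\in K_i$, and $|N(v)\cap K_i|\le(1-\epsilon/2)\Delta$ for all $v\notin K_i$. ''With high probability'' means with probability at least $1-n^{-c}$, where $c>0$ can be made arbitrarily large by choosing the constant $C$ large enough. *)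

(* Defs.v *)
From mathcomp Require Import all_boot all_order all_algebra.
From mathcomp Require Import reals exp.
Set Implicit Arguments. Unset Strict Implicit. Unset Printing Implicit Defensive.
Import Order.TTheory GRing.Theory Num.Theory.
Local Open Scope ring_scope.

Section Graph.
Variables (V : finType) (e : rel V).

Definition simple_graph := symmetric e /\ irreflexive e.

Definition nbhd (v : V) : {set V} := [set u | e v u].

Definition maxdeg : nat := \max_(v : V) #|nbhd v|.

Definition edges_in (R : realType) (S : {set V}) : R :=
  (#|[set p : V * V | [&& p.1 \in S, p.2 \in S & e p.1 p.2]]|)%:R / 2.

Definition sparsity (R : realType) (v : V) : R :=
  (maxdeg%:R)^-1 * ('C(maxdeg, 2)%:R - edges_in R (nbhd v)).

Definition almost_clique (R : realType) (eps : R) (K : {set V}) : Prop :=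
  [/\ (#|K|%:R <= (1 + eps) * maxdeg%:R),
      (forall v, v \in K -> (1 - eps) * maxdeg%:R <= #|nbhd v :&: K|%:R) &
      (forall v, v \notin K -> #|nbhd v :&: K|%:R <= (1 - eps / 2) * maxdeg%:R)].

(* epsilon-almost-clique decomposition (Vsparse, P = {K_1,...,K_k});
   alpha is the constant hidden in the Omega(eps^2 Delta) sparsity bound *)
Definition almost_clique_decomposition (R : realType) (alpha eps : R)
    (Vsparse : {set V}) (P : {set {set V}}) : Prop :=
  [/\ partition P (~: Vsparse),
      (forall v, v \in Vsparse -> alpha * eps ^+ 2 * maxdeg%:R <= sparsity R v) &
      (forall K, K \in P -> almost_clique eps K)].

End Graph.

Definition good_sampling (R : realType) (V : finType) (e : rel V) (K : {set V})
    (k : nat) (C : R) (t : {ffun V -> 'I_k}) : bool :=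
  [forall i : 'I_k, forall u in K, forall w in K,
     C / 4 * ln (#|V|%:R : R) <=
       #|[set v in K | t v == i] :&: nbhd e u :&: nbhd e w|%:R].

(* probability under the uniform distribution on functions V -> [k]
   (vertices independently sample uniformly from [k]) *)
Definition prob_uniform (R : realType) (V : finType) (k : nat)
    (E : pred {ffun V -> 'I_k}) : R :=
  #|[set t | E t]|%:R / (k ^ #|V|)%:R.

(* Main.v *)
Require Import Defs.
From mathcomp Require Import all_boot all_order all_algebra.
From mathcomp Require Import reals exp.
From mathcomp Require Import sequences ring lra.
Import Order.TTheory GRing.Theory Num.Theory.
Local Open Scope ring_scope.


Lemma wsum (R : realType) (V : finType) (k : nat) (P : V -> 'I_k -> bool) (x : R) :
  \sum_(t : {ffun V -> 'I_k}) x ^+ #|[set v | P v (t v)]| =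
  \prod_v \sum_a (if P v a then x else 1).
Proof.
rewrite bigA_distr_bigA; apply: eq_bigr => t _.
rewrite -prodr_const big_mkcond /=; apply: eq_bigr => v _.
by rewrite inE.
Qed.

Lemma vsum (R : realType) (k : nat) (i : 'I_k) (b : bool) (x : R) :
  \sum_(a : 'I_k) (if b && (a == i) then x else 1) =
  k%:R * (if b then 1 - (1 - x) / k%:R else 1).
Proof.
have k0 : k%:R != 0 :> R by rewrite pnatr_eq0 -lt0n (leq_ltn_trans _ (ltn_ord i)).
case: b => /=; last by rewrite sumr_const card_ord mulr1.
rewrite (bigD1 i) //= eqxx.
rewrite (eq_bigr (fun _ => 1)); last by move=> a /negbTE ->.
rewrite sumr_const.
have -> : #|[pred a : 'I_k | a != i]| = k.-1.
  by rewrite cardC1 card_ord.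
rewrite mulrBr mulr1 mulrCA divff // mulr1.
case: k i k0 => [[]//|k] i _ /=.
rewrite -[k.+1]addn1 natrD; lra.
Qed.

Lemma prod_bound (R : realType) (V : finType) (k : nat) (Q : pred V) (x : R) :
  (0 < k)%N -> 0 <= x <= 1 ->
  \prod_(v : V) (k%:R * (if Q v then 1 - (1 - x) / k%:R else 1)) <=
  (k ^ #|V|)%:R * expR (- ((1 - x) / k%:R) * #|[set v | Q v]|%:R).
Proof.
move=> k0 /andP[x0 x1].
rewrite prodrMl natrX.
have kp : 0 < k%:R :> R by rewrite ltr0n.
apply: ler_wpM2l; first by rewrite exprn_ge0 // ltW.
set q := 1 - (1 - x) / k%:R.
have q0 : 0 <= q.
  rewrite /q subr_ge0 ler_pdivrMr // mul1r.
  apply: (le_trans (y := 1)); first lra.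
  by rewrite ler1n.
rewrite -big_mkcond /= prodr_const.
have -> : #|[set v | Q v]| = #|[pred v | Q v]| by apply: eq_card => v; rewrite inE.
rewrite mulrC expRM_natl.
apply: lerXn2r; rewrite ?nnegrE ?expR_ge0 //.
rewrite /q; have := expR_ge1Dx (- ((1 - x) / k%:R)); lra.
Qed.

Theorem lemma4p1 (R : realType) (c : R) : 0 < c ->
  exists C0 : R, 0 < C0 /\
  forall (C : R), C0 <= C ->
  forall (alpha : R), 0 < alpha ->
  forall (V : finType) (e : rel V) (Vsparse : {set V}) (P : {set {set V}})
         (K : {set V}) (k : nat),
    simple_graph e ->
    almost_clique_decomposition e alpha ((10%:R : R) ^+ 5)^-1 Vsparse P ->
    K \in P ->
    (0 < k)%N ->
    (k%:R <= (maxdeg e)%:R / (C * ln (#|V|%:R))) ->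
    1 - (#|V|%:R) `^ (- c) <= @prob_uniform R V k (good_sampling e K C).
Proof.
move=> c0.
have l2 : 0 < ln (2:R) by apply: ln_gt0; lra.
set a2 := (ln (2:R))^-1.
have a0 : 0 < a2 by rewrite /a2 invr_gt0.
have al2 : a2 * ln 2 = 1 by rewrite /a2 mulVf // gt_eqF.
exists (5 * (c + 3) + a2); split; first lra.
move=> C hC alpha _ V e Vs P K k _ [_ _ hAC] KP k0 hk.
have Cpos : 0 < C by lra.
set n := #|V| in hk *.
set l := ln (n%:R : R) in hk *.
set D := maxdeg e in hk *.
have kpos : 1 <= k%:R :> R by rewrite ler1n.
have Cl : 0 < C * l.
  rewrite ltNge; apply/negP => h.
  have : D%:R / (C * l) <= 0.
    by apply: mulr_ge0_le0; rewrite ?ler0n // invr_le0.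
  lra.
have lpos : 0 < l by rewrite -(pmulr_rgt0 _ Cpos).
have n1 : 1 < n%:R :> R.
  rewrite ltNge; apply/negP => h; have := ln_le0 h; rewrite -/l; lra.
have ll2 : ln 2 <= l.
  rewrite /l ler_ln ?posrE //; last lra.
  by move: n1; rewrite !ltr1n ler_nat.
have Cl1 : 1 <= C * l by nra.
have hD : k%:R * (C * l) <= D%:R by rewrite -ler_pdivlMr.
have Dn : D%:R <= n%:R :> R.
  rewrite ler_nat; apply/bigmax_leqP => v _; exact: max_card.
have kn : k%:R <= n%:R :> R by nra.
set eps := ((10%:R : R) ^+ 5)^-1 in hAC.
have eps0 : 0 <= eps by rewrite invr_ge0 exprn_ge0 // ler0n.
have eps1 : eps * 100000%:R = 1.
  by rewrite /eps -natrX mulVf // pnatr_eq0.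
have [hK hin _] := hAC K KP.
have Sb : forall u w, u \in K -> w \in K ->
    (1 - 3 * eps) * D%:R <= #|[set v | (v \in K) && e u v && e w v]|%:R.
  move=> u w uK wK.
  have h1 := hin u uK; have h2 := hin w wK.
  have := cardsUI (nbhd e u :&: K) (nbhd e w :&: K).
  have -> : nbhd e u :&: K :&: (nbhd e w :&: K) = [set v | (v \in K) && e u v && e w v].
    by apply/setP => v; rewrite !inE; case: (v \in K); case: (e u v); case: (e w v).
  have : (#|nbhd e u :&: K :|: nbhd e w :&: K| <= #|K|)%N.
    by apply: subset_leq_card; apply/subsetP => v; rewrite !inE => /orP[]/andP[].
  rewrite -(ler_nat R) => hU /(congr1 (fun m : nat => m%:R : R)); rewrite !natrD => hE.
  rewrite -/D in h1 h2 hK hU *. lra.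
set x := expR (-1 : R).
have x0 : 0 <= x by apply: expR_ge0.
have x2 : x <= 1/2.
  have h1 := expR_ge1Dx (1 : R).
  have h2 : x * expR 1 = 1 by rewrite /x expRN mulVf // gt_eqF // expR_gt0.
  nra.
have Npos : 0 < (k ^ n)%:R :> R by rewrite ltr0n expn_gt0 k0.
set N := (k ^ n)%:R : R.
set z := C * l.
set L := C / 4 * l.
pose Pp (p : 'I_k * V * V) := (p.1.2 \in K) && (p.2 \in K).
pose Pr (p : 'I_k * V * V) (v : V) (a : 'I_k) :=
  ((v \in K) && (a == p.1.1)) && e p.1.2 v && e p.2 v.
pose W (t : {ffun V -> 'I_k}) :=
  \sum_(p | Pp p) expR L * x ^+ #|[set v | Pr p v (t v)]|.
pose G := [set t : {ffun V -> 'I_k} | good_sampling e K C t].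
pose Bs := [set t : {ffun V -> 'I_k} | ~~ good_sampling e K C t].
have hcard : (#|G| + #|Bs| = k ^ n)%N.
  have := cardsC G; rewrite card_ffun card_ord -/n.
  have -> : ~: G = Bs by apply/setP => t; rewrite !inE.
  done.
have good_bad : #|G| = (k ^ n - #|Bs|)%N by rewrite -hcard addnK.
have bad_le : (#|Bs| <= k ^ n)%N by rewrite -hcard leq_addl.
set B := #|Bs| in good_bad bad_le.
suff hB : B%:R <= N * n%:R `^ (- c).
  rewrite /prob_uniform -/n good_bad natrB // ler_pdivlMr // -/N.
  nra.
have step1 : B%:R <= \sum_t W t.
  rewrite /B -sumr_const big_mkcond /=; apply: ler_sum => t _.
  have W0 : 0 <= W t.
    by apply: sumr_ge0 => p _; apply: mulr_ge0; rewrite ?expR_ge0 ?exprn_ge0.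
  case: ifP => hb //.
  rewrite inE /good_sampling in hb.
  move/forallPn: hb => [i /forall_inPn [u uK /forall_inPn [w wK hlt]]].
  rewrite -ltNge -/n -/l -/L in hlt.
  rewrite /W (bigD1 (i, u, w)) /=; last by rewrite /Pp /= uK wK.
  set rest := (X in _ + X).
  have r0 : 0 <= rest.
    by apply: sumr_ge0 => p _; apply: mulr_ge0; rewrite ?expR_ge0 ?exprn_ge0.
  have -> : #|[set v | Pr (i, u, w) v (t v)]| =
            #|[set v in K | t v == i] :&: nbhd e u :&: nbhd e w|.
    by apply: eq_card => v; rewrite !inE.
  set m := #|_| in hlt *.
  rewrite /x -expRM_natl mulrN1 -expRD.
  have : 1 < expR (L + - m%:R).
    rewrite expR_gt1; lra.
  lra.
apply: (le_trans step1).
rewrite /W exchange_big /=.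
have hp : forall p, Pp p ->
    \sum_(t : {ffun V -> 'I_k}) expR L * x ^+ #|[set v | Pr p v (t v)]| <= N * expR (- z / 5).
  move=> [[i u w]] /andP[/= uK wK].
  rewrite -mulr_sumr wsum.
  have -> : \prod_v \sum_a (if Pr (i, u, w) v a then x else 1) =
     \prod_v \sum_(a : 'I_k) (if ((v \in K) && e u v && e w v) && (a == i) then x else 1).
    apply: eq_bigr => v _; apply: eq_bigr => a _; rewrite /Pr /=.
    by case: (v \in K); case: (a == i); case: (e u v); case: (e w v).
  under eq_bigr => v _ do rewrite vsum.
  have x01 : 0 <= x <= 1 by apply/andP; split; lra.
  have hpb := @prod_bound R V k (fun v => (v \in K) && e u v && e w v) x k0 x01.
  have hS := Sb u w uK wK.
  set S := #|[set v | _]|%:R in hpb hS.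
  have kp : 0 < k%:R :> R by lra.
  have hy : (1 - 3 * eps) * z <= S / k%:R.
    rewrite ler_pdivlMr //; rewrite -/z in hD; nra.
  have e1 : (1 - x) / k%:R * S = (1 - x) * (S / k%:R) by ring.
  have hexp : L + (- ((1 - x) / k%:R) * S) <= - z / 5.
    rewrite mulNr e1 /L.
    have -> : C / 4 * l = z / 4 by rewrite /z; ring.
    have z0 : 0 <= z by apply: ltW.
    have e3 : 3 * eps <= 1/10 by lra.
    have h1 : 9/10 * z <= S / k%:R by nra.
    have h2 : (S / k%:R) / 2 <= (1 - x) * (S / k%:R) by nra.
    lra.
  apply: (le_trans (ler_wpM2l (expR_ge0 _) hpb)).
  rewrite -/N mulrCA -expRD.
  apply: ler_wpM2l; first lra.
  by rewrite ler_expR.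
apply: (le_trans (ler_sum _ hp)).
rewrite sumr_const -(mulr_natl (N * expR (- z / 5))).
have hcnt : (#|[pred p | Pp p]|%:R : R) <= (k * n * n)%:R.
  rewrite ler_nat; apply: (leq_trans (max_card _)).
  by rewrite !card_prod !card_ord.
have n0 : (n%:R : R) != 0 by rewrite gt_eqF //; lra.
rewrite /powR (negbTE n0) -/l.
have hn3 : ((k * n * n)%:R : R) <= expR (3%:R * l).
  rewrite expRM_natl /l lnK ?posrE; last lra.
  rewrite !natrM !exprS expr0 mulr1 -/n; nra.
have hfin : expR (3%:R * l) * expR (- z / 5) <= expR (- c * l).
  rewrite -expRD ler_expR /z.
  have : 0 <= C - 5 * (c + 3) by lra.
  nra.
have e0 : 0 <= N * expR (- z / 5) by apply: mulr_ge0; [lra|apply: expR_ge0].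
apply: (le_trans (ler_wpM2r e0 (le_trans hcnt hn3))).
rewrite mulrCA; apply: ler_wpM2l; first lra.
exact: hfin.
Qed.
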